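(* Let $B\ge 1$ be an integer and let $x,y\in[0,1]$. Define $s(x)=\mathrm{round}(Bx)\in\{0,1,\dots,B\}$ (rounding to the nearest integer), and let $\boldsymbol{\phi}(x)\in\{0,1\}^{2B}$ be the binary vector whose coordinates $s(x), s(x)+1,\dots,s(x)+B-1$ (coordinates indexed $0,\dots,2B-1$) equal $1$ and all other coordinates equal $0$; define $s(y)$ and $\boldsymbol{\phi}(y)$ in the same way. Let $t:=|x-y|$, $t_-:=\max\{0,\,t-\tfrac1B\}$ and $t_+:=\min\{1,\,t+\tfrac1B\}$. Then $$\frac{2t_-}{1+t_-}\;\le\; d_J(\boldsymbol{\phi}(x),\boldsymbol{\phi}(y))\;\le\;\frac{2t_+}{1+t_+}.$$
   Context: For binary vectors $\mathbf{a},\mathbf{b}\in\{0,1\}^{m}$ with supports $A=\{k:a_k=1\}$ and $C=\{k:b_k=1\}$ (not both empty), the Jaccard distance is $d_J(\mathbf{a},\mathbf{b})=1-\frac{|A\cap C|}{|A\cup C|}$. The map $\boldsymbol{\phi}$ is the ''Binary Encoding with Padding'' of a numerical value scaled to $[0,1]$: a contiguous block of $B$ ones placed inside a vector of length $2B$ at an offset proportional to the value. *)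

(* Defs.v *)
From mathcomp Require Import all_boot all_order all_algebra.
From mathcomp Require Import reals.

Import Order.TTheory GRing.Theory Num.Theory.
Local Open Scope ring_scope.

(* Jaccard distance of binary vectors a b in {0,1}^m, via their supports.
   (Only meaningful when the supports are not both empty.) *)
Definition jaccard (R : realType) {m : nat} (a b : 'I_m -> bool) : R :=
  let A := [set k | a k] in
  let C := [set k | b k] in
  1 - (#|A :&: C|%:R / #|A :|: C|%:R).

(* round to nearest integer, ties rounded up: floor(z + 1/2) *)
Definition round_nearest {R : realType} (z : R) : int := Num.floor (z + 2^-1).

Definition bep_shift {R : realType} (B : nat) (x : R) : int :=
  round_nearest (B%:R * x).

Definition bep {R : realType} (B : nat) (x : R) : 'I_(2 * B) -> bool :=
  fun k => (bep_shift B x <= (k : nat)%:Z) && ((k : nat)%:Z < bep_shift B x + B%:Z).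

(* Main.v *)
Require Import Defs.
From mathcomp Require Import all_boot all_order all_algebra.
From mathcomp Require Import reals.
From mathcomp Require Import zify ring lra.
Import Order.TTheory GRing.Theory Num.Theory.
Local Open Scope ring_scope.

Lemma card_itv n lo hi : (lo <= hi <= n)%N ->
  #|[set k : 'I_n | (lo <= k < hi)%N]| = (hi - lo)%N.
Proof.
move=> /andP[lh hn].
rewrite -sum1_card.
rewrite (eq_bigl (fun k : 'I_n => (lo <= k < hi)%N)); last by move=> k; rewrite inE.
rewrite -(big_mkord (fun k => (lo <= k < hi)%N) (fun _ => 1%N)).
rewrite -(big_nat_widen 0 hi n (fun k => (lo <= k)%N)) //.
rewrite (eq_bigl (fun i => predT i && (lo <= i)%N)) // -(big_nat_widenl lo 0) //.
by rewrite big_mkcond /= sum_nat_const_nat muln1.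
Qed.

Lemma shift_props (R : realType) (B : nat) (x : R) : 0 <= x <= 1 ->
  exists n : nat, [/\ bep_shift B x = n%:Z, (n <= B)%N &
     `|n%:R - B%:R * x| <= 2^-1].
Proof.
move=> /andP[x0 x1].
rewrite /bep_shift /round_nearest.
set z := B%:R * x + 2^-1.
have Bx0 : 0 <= B%:R * x by rewrite mulr_ge0.
have BxB : B%:R * x <= B%:R by rewrite -{2}(mulr1 B%:R) ler_wpM2l.
have fl := floor_le z.
have fg := floorD1_gt z.
have a0 : 0 <= Num.floor z by rewrite floor_ge_int /z; lra.
have aB : Num.floor z <= B%:Z.
  rewrite -ltzD1 floor_lt_int intrD /=.
  have -> : ((B%:Z)%:~R : R) = B%:R by [].
  rewrite /z; lra.
move: a0 aB fl fg; case: (Num.floor z) => [n|n] // _ aB fl fg.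
exists n; split => //.
rewrite intrD /= in fg.
have e : (n%:~R : R) = n%:R by [].
have e1 : (1%:~R : R) = 1 by [].
rewrite e e1 in fg; rewrite e in fl.
rewrite ler_norml; apply/andP; split; rewrite /z in fl fg; lra.
Qed.

Lemma f_mono (R : realType) (a b : R) : 0 <= a -> a <= b ->
  (2 * a) / (1 + a) <= (2 * b) / (1 + b).
Proof.
move=> a0 ab.
have h1 : 0 < 1 + a by lra.
have h2 : 0 < 1 + b by lra.
rewrite ler_pdivrMr // mulrAC ler_pdivlMr //.
nra.
Qed.

Theorem lemma3p1 (R : realType) (B : nat) (x y : R) :
  (1 <= B)%N -> 0 <= x <= 1 -> 0 <= y <= 1 ->
  let t : R := `|x - y| in
  let tm : R := Num.max 0 (t - (B%:R)^-1) in
  let tp : R := Num.min 1 (t + (B%:R)^-1) in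
  (2 * tm) / (1 + tm) <= jaccard R (bep B x) (bep B y) <= (2 * tp) / (1 + tp).
Proof.
move=> B1 hx hy; rewrite /=.
set t := `|x - y|.
set tm := Num.max 0 (t - B%:R^-1).
set tp := Num.min 1 (t + B%:R^-1).
have [na [ea naB ha]] := @shift_props R B x hx.
have [nc [ec ncB hc]] := @shift_props R B y hy.
have bepE : forall (z : R) n, bep_shift B z = n%:Z -> forall k : 'I_(2 * B),
    bep B z k = (n <= k < n + B)%N.
  move=> z n e k; rewrite /bep e.
  by rewrite lez_nat -PoszD ltz_nat.
have EA : [set k | bep B x k] = [set k : 'I_(2 * B) | (na <= k < na + B)%N].
  by apply/setP => k; rewrite !inE (bepE _ _ ea).
have EC : [set k | bep B y k] = [set k : 'I_(2 * B) | (nc <= k < nc + B)%N].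
  by apply/setP => k; rewrite !inE (bepE _ _ ec).
have EI : [set k | bep B x k] :&: [set k | bep B y k] =
   [set k : 'I_(2 * B) | (maxn na nc <= k < minn na nc + B)%N].
  apply/setP => k; rewrite EA EC !inE.
  case: k => k hk /=.
  apply/idP/idP.
    move=> /andP[/andP[h1 h2] /andP[h3 h4]]; apply/andP; split; lia.
  move=> /andP[h1 h2]; apply/andP; split; apply/andP; split; lia.
have cA : #|[set k | bep B x k]| = B.
  by rewrite EA card_itv; [lia | apply/andP; split; lia].
have cC : #|[set k | bep B y k]| = B.
  by rewrite EC card_itv; [lia | apply/andP; split; lia].
set D := (maxn na nc - minn na nc)%N.
have cI : #|[set k | bep B x k] :&: [set k | bep B y k]| = (B - D)%N.
  by rewrite EI card_itv; [rewrite /D; lia | apply/andP; split; lia].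
have cU : #|[set k | bep B x k] :|: [set k | bep B y k]| = (B + D)%N.
  have := cardsUI [set k | bep B x k] [set k | bep B y k].
  rewrite cI cA cC /D; lia.
have DB : (D <= B)%N by rewrite /D; lia.
have jE : jaccard R (bep B x) (bep B y) = 1 - (B%:R - D%:R) / (B%:R + D%:R).
  by rewrite /jaccard cI cU natrB // natrD.
have Dr : (D%:R : R) = `|na%:R - nc%:R|.
  rewrite /D; case: (leqP na nc) => h.
    rewrite natrB // distrC ger0_norm //.
    by rewrite subr_ge0 ler_nat.
  have h' := ltnW h.
  rewrite natrB // ger0_norm //.
  by rewrite subr_ge0 ler_nat.
have Bp : (0 : R) < B%:R by rewrite ltr0n.
have key : `|D%:R - B%:R * t| <= 1.
  have -> : B%:R * t = `|B%:R * (x - y)| by rewrite normrM gtr0_norm.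
  rewrite Dr; apply: le_trans (ler_dist_dist _ _) _.
  have -> : na%:R - nc%:R - B%:R * (x - y) =
     (na%:R - B%:R * x) - (nc%:R - B%:R * y) :> R by ring.
  apply: le_trans (ler_normB _ _) _; lra.
move: key; rewrite ler_norml => /andP[k1 k2].
set u := (D%:R : R) / B%:R.
have Dr0 : (0 : R) <= D%:R by [].
have DrB : (D%:R : R) <= B%:R by rewrite ler_nat.
have jE' : jaccard R (bep B x) (bep B y) = (2 * u) / (1 + u).
  rewrite jE /u; field.
  apply/andP; split; rewrite lt0r_neq0 //; lra.
have u0 : 0 <= u by rewrite /u divr_ge0.
have u1 : u <= 1 by rewrite /u ler_pdivrMr // mul1r.
have uB : u * B%:R = D%:R by rewrite /u mulfVK // lt0r_neq0.
have iB : B%:R^-1 * B%:R = 1 :> R by rewrite mulVf // lt0r_neq0.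
rewrite jE'; apply/andP; split; apply: f_mono.
- by rewrite /tm le_max lexx.
- rewrite /tm ge_max u0 /=.
  rewrite -(ler_pM2r Bp) mulrBl iB uB; lra.
- by [].
- rewrite /tp le_min u1 /=.
  rewrite -(ler_pM2r Bp) mulrDl iB uB; lra.
Qed.
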